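(* Let $K$ be a perfect field of characteristic $p>0$ and let $\theta:K[x]\to K[x^p]$, $\theta(f)=f^p+\frac{d^{p-1}f}{dx^{p-1}}$ (a bijection). Write $g\in K[x^p]$ as $g=\sum_{i=0}^{p-1}\mu_ix^{pi}$ with $\mu_i\in K[x^{p^2}]$, and write $\theta^{-1}(g)=\sum_{i=0}^{p-1}\lambda_ix^i$ with $\lambda_i\in K[x^p]$. Then (1) for $i=0,1,\dots,p-2$: $\displaystyle \lambda_i=\mu_i^{1/p}+F^{-1}\pi_iF^{-1}\sum_{j\ge0}\Delta^j(\mu_{p-1})$; (2) $\displaystyle \lambda_{p-1}=\sum_{i=0}^{p-2}x^{pi}\,\pi_iF^{-1}\sum_{j\ge0}\Delta^j(\mu_{p-1})+x^{p(p-1)}\sum_{j\ge1}\Delta^j(\mu_{p-1})$.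
   Context: $F^{-1}$ denotes the inverse of the Frobenius, applied to polynomials in $x^p$: $F^{-1}\big(\sum_j c_jx^{pj}\big)=\sum_j c_j^{1/p}x^{j}$ ($c_j\in K$); in particular $\mu_i^{1/p}:=F^{-1}(\mu_i)\in K[x^p]$, and $F^{-1}$ maps $K[x^{p^2}]\to K[x^p]$ and $K[x^p]\to K[x]$. For $i=0,\dots,p-1$, $\pi_i:K[x^p]\to K[x^{p^2}]$ is the map $\sum_{k=0}^{p-1}a_kx^{pk}\mapsto a_i$ ($a_k\in K[x^{p^2}]$), using $K[x^p]=\bigoplus_{k=0}^{p-1}K[x^{p^2}]x^{pk}$ (in the paper it is expressed as $\partial^{[pi]}\prod_{j\ne i}(x^p\partial^{[p]}-j)/\prod_{j\neq i}(i-j)$ with divided-power derivations $\partial^{[m]}=\frac{d^m}{dx^m}/m!$). $\Delta:=\partial^{[(p-1)p]}F^{-1}:K[x^{p^2}]\to K[x^{p^2}]$ is the $\mathbb{F}_p$-linear map $\sum_{i\ge0}a_ix^{p^2i}\mapsto\sum_{i\ge0}a_{p-1+pi}^{1/p}x^{p^2i}$ ($a_i\in K$), where $\partial^{[m]}(x^k)=\binom{k}{m}x^{k-m}$; $\Delta$ is locally nilpotent, so the sums over $j$ are finite. *)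

(* Defs.v *)
From HB Require Import structures.
From mathcomp Require Import all_boot all_order all_algebra.
Set Implicit Arguments. Unset Strict Implicit. Unset Printing Implicit Defensive.
Import GRing.Theory.
Local Open Scope ring_scope.

(* All polynomials live in {poly K} = K[x]; the subrings K[x^n] are described
   by the predicate [inXn n]. *)
Definition inXn (K : fieldType) (n : nat) (q : {poly K}) : Prop :=
  forall k : nat, ~~ (n %| k)%N -> q`_k = 0.

Definition theta (K : fieldType) (p : nat) (f : {poly K}) : {poly K} :=
  f ^+ p + f^`(p.-1).

(* F^{-1} : sum_j c_j x^{pj} |-> sum_j c_j^{1/p} x^j, where r is the p-th
   root map of K (inverse of Frobenius). *)
Definition Finv (K : fieldType) (p : nat) (r : K -> K) (h : {poly K}) : {poly K} :=
  \poly_(j < size h) r h`_(j * p).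

(* pi_i : K[x^p] -> K[x^{p^2}],  sum_{k<p} a_k x^{pk} |-> a_i  (a_k in K[x^{p^2}]) *)
Definition pi_ (K : fieldType) (p i : nat) (h : {poly K}) : {poly K} :=
  \poly_(m < size h) (if (p * p %| m)%N then h`_(m + p * i) else 0).

(* Delta : sum_i a_i x^{p^2 i} |-> sum_i a_{p-1+pi}^{1/p} x^{p^2 i} *)
Definition Delta (K : fieldType) (p : nat) (r : K -> K) (h : {poly K}) : {poly K} :=
  \poly_(k < size h)
    (if (p * p %| k)%N then r h`_(p * p * (p - 1 + p * (k %/ (p * p)))) else 0).

(* sum_{j >= 0} Delta^j(h): Delta is locally nilpotent and strictly lowers the
   degree of nonzero elements of K[x^{p^2}], so Delta^j(h) = 0 for j >= size h. *)
Definition sumDelta (K : fieldType) (p : nat) (r : K -> K) (h : {poly K}) : {poly K} :=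
  \sum_(j < size h) iter j (Delta p r) h.

Definition sumDelta1 (K : fieldType) (p : nat) (r : K -> K) (h : {poly K}) : {poly K} :=
  \sum_(1 <= j < size h) iter j (Delta p r) h.

(* Main.v *)
Require Import Defs.
From HB Require Import structures.
From mathcomp Require Import all_boot all_order all_algebra.
From mathcomp Require Import zify ring.
Import GRing.Theory.
Local Open Scope ring_scope.
Set Implicit Arguments. Unset Strict Implicit.

Lemma frobB (K : fieldType) (p : nat) (charKp : p \in [pchar K]) (a b : K) :
  (a - b) ^+ p = a ^+ p - b ^+ p.
Proof. by have := pFrobenius_autB_comm charKp (mulrC a b); rewrite !pFrobenius_autE. Qed.

Lemma frobD (K : fieldType) (p : nat) (charKp : p \in [pchar K]) (a b : K) :
  (a + b) ^+ p = a ^+ p + b ^+ p.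
Proof. by have := pFrobenius_autD_comm charKp (mulrC a b); rewrite !pFrobenius_autE. Qed.

Lemma frob_inj (K : fieldType) (p : nat) (charKp : p \in [pchar K]) (a b : K) :
  a ^+ p = b ^+ p -> a = b.
Proof.
move=> h; apply/eqP; rewrite -subr_eq0.
have : (a - b) ^+ p == 0 by rewrite frobB // h subrr.
by rewrite expf_eq0 => /andP[].
Qed.

Lemma r_pow (K : fieldType) (p : nat) (r : K -> K) (charKp : p \in [pchar K])
  (hr : forall a : K, r a ^+ p = a) (a : K) : r (a ^+ p) = a.
Proof. by apply: (frob_inj charKp); rewrite hr. Qed.

Lemma r0 (K : fieldType) (p : nat) (r : K -> K) (charKp : p \in [pchar K])
  (hr : forall a : K, r a ^+ p = a) : r 0 = 0.
Proof.
apply: (frob_inj charKp); rewrite hr expr0n.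
by have := pcharf_prime charKp; case: p {charKp hr}.
Qed.

Lemma rB (K : fieldType) (p : nat) (r : K -> K) (charKp : p \in [pchar K])
  (hr : forall a : K, r a ^+ p = a) (a b : K) : r (a - b) = r a - r b.
Proof. by apply: (frob_inj charKp); rewrite hr frobB // !hr. Qed.

Lemma rD (K : fieldType) (p : nat) (r : K -> K) (charKp : p \in [pchar K])
  (hr : forall a : K, r a ^+ p = a) (a b : K) : r (a + b) = r a + r b.
Proof. by apply: (frob_inj charKp); rewrite hr frobD // !hr. Qed.


Lemma coef_Finv (K : fieldType) (p : nat) (r : K -> K) (charKp : p \in [pchar K])
  (hr : forall a : K, r a ^+ p = a) (h : {poly K}) j :
  (Finv p r h)`_j = r h`_(j * p).
Proof.
rewrite /Finv coef_poly; case: ifP => // /negbT; rewrite -leqNgt => hj.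
have hp := prime_gt1 (pcharf_prime charKp).
rewrite nth_default ?(r0 charKp hr) //; apply: leq_trans hj _; nia.
Qed.

Lemma coef_pi (K : fieldType) (p i : nat) (h : {poly K}) m :
  (pi_ p i h)`_m = if (p * p %| m)%N then h`_(m + p * i) else 0.
Proof.
rewrite /pi_ coef_poly; case: ifP => // /negbT; rewrite -leqNgt => hj.
by case: ifP => // _; rewrite nth_default //; apply: leq_trans hj _; rewrite leq_addr.
Qed.

Lemma coef_Delta (K : fieldType) (p : nat) (r : K -> K) (charKp : p \in [pchar K])
  (hr : forall a : K, r a ^+ p = a) (h : {poly K}) k :
  (Delta p r h)`_k = if (p * p %| k)%N then r h`_(p * p * (p - 1 + p * (k %/ (p * p)))) else 0.
Proof.
have hp := prime_gt1 (pcharf_prime charKp).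
rewrite /Delta coef_poly; case: ifP => // /negbT; rewrite -leqNgt => hj.
case: ifP => // /dvdnP [q hk]; move: hj; rewrite hk mulnK; last by nia.
move=> hj; rewrite nth_default ?(r0 charKp hr) //; apply: leq_trans hj _; nia.
Qed.


Lemma coef_frob (K : fieldType) (p : nat) (charKp : p \in [pchar K]) (q : {poly K}) n :
  (q ^+ p)`_n = if (p %| n)%N then q`_(n %/ p) ^+ p else 0.
Proof.
have hp := prime_gt1 (pcharf_prime charKp).
have charP : p \in [pchar {poly K}] by rewrite pchar_poly.
have fE : forall x : {poly K}, x ^+ p = pFrobenius_aut charP x by [].
rewrite -{1}[q]coefK poly_def fE rmorph_sum.
rewrite (eq_bigr (fun i : 'I_(size q) => (q`_i ^+ p) *: 'X^(i * p))); last first.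
  by move=> i _; rewrite -[LHS]/((q`_i *: 'X^i) ^+ p) exprZn -exprM.
rewrite coef_sumMXn.
case: ifP => [/dvdnP [m ->] | hn].
  rewrite mulnK; last by nia.
  rewrite (eq_bigl (fun i : 'I_(size q) => i == m :> nat)); last first.
    by move=> i /=; rewrite eqn_mul2r; have -> : (p == 0%N) = false by apply/eqP; lia.
  rewrite (big_ord1_eq _ (fun j => q`_j ^+ p)); case: ltnP => // hm.
  by rewrite nth_default // expr0n; have -> : (p == 0%N) = false by apply/eqP; lia.
rewrite big_pred0 // => i; apply/negbTE; apply: contraFN hn => /eqP <-.
by rewrite dvdn_mull.
Qed.


Lemma inXn_frob (K : fieldType) (p : nat) (charKp : p \in [pchar K]) (q : {poly K}) :
  inXn p q -> inXn (p * p) (q ^+ p).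
Proof.
have hp := prime_gt1 (pcharf_prime charKp).
move=> hq k hk; rewrite (coef_frob charKp); case: ifP => // /dvdnP [m hm].
rewrite hm mulnK; last by lia.
rewrite hq ?expr0n; first by have -> : (p == 0%N) = false by apply/eqP; lia.
apply: contra hk => /dvdnP [l hl]; apply/dvdnP; exists l.
by rewrite hm hl mulnA.
Qed.

Lemma deriv_inXn (K : fieldType) (p : nat) (charKp : p \in [pchar K]) (q : {poly K}) :
  inXn p q -> q^`() = 0.
Proof.
move=> hq; apply/polyP => i; rewrite coef_deriv coef0.
case h: (p %| i.+1)%N.
  have /eqP h0 : (i.+1)%:R == 0 :> K by rewrite -(dvdn_pcharf charKp).
  by rewrite -mulr_natr h0 mulr0.
by rewrite hq ?h // mul0rn.
Qed.

Lemma derivn_mulC (K : fieldType) (q s : {poly K}) n :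
  q^`() = 0 -> (q * s)^`(n) = q * s^`(n).
Proof.
move=> hq; elim: n => [|n IH]; first by rewrite !derivn0.
by rewrite !derivnS IH derivM hq mul0r add0r.
Qed.

Lemma Finv_frob (K : fieldType) (p : nat) (r : K -> K) (charKp : p \in [pchar K])
  (hr : forall a : K, r a ^+ p = a) (q : {poly K}) : Finv p r (q ^+ p) = q.
Proof.
have hp := prime_gt1 (pcharf_prime charKp).
apply/polyP => j; rewrite (coef_Finv charKp hr) (coef_frob charKp) dvdn_mull // mulnK; last by lia.
by rewrite (r_pow charKp hr).
Qed.

Lemma FinvD (K : fieldType) (p : nat) (r : K -> K) (charKp : p \in [pchar K])
  (hr : forall a : K, r a ^+ p = a) (a b : {poly K}) :
  Finv p r (a + b) = Finv p r a + Finv p r b.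
Proof. by apply/polyP => j; rewrite coefD !(coef_Finv charKp hr) coefD (rD charKp hr). Qed.

Lemma piB (K : fieldType) (p i : nat) (a b : {poly K}) :
  pi_ p i (a - b) = pi_ p i a - pi_ p i b.
Proof. by apply/polyP => j; rewrite coefB !coef_pi coefB; case: ifP; rewrite ?subr0. Qed.

Lemma DeltaB (K : fieldType) (p : nat) (r : K -> K) (charKp : p \in [pchar K])
  (hr : forall a : K, r a ^+ p = a) (a b : {poly K}) :
  Delta p r (a - b) = Delta p r a - Delta p r b.
Proof.
apply/polyP => j; rewrite coefB !(coef_Delta charKp hr) coefB (rB charKp hr).
by case: ifP; rewrite ?subr0.
Qed.

Lemma iterDeltaB (K : fieldType) (p : nat) (r : K -> K) (charKp : p \in [pchar K])
  (hr : forall a : K, r a ^+ p = a) (a b : {poly K}) n :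
  iter n (Delta p r) (a - b) = iter n (Delta p r) a - iter n (Delta p r) b.
Proof. by elim: n => //= n ->; rewrite (DeltaB charKp hr). Qed.

Lemma size_Delta (K : fieldType) (p : nat) (r : K -> K) (charKp : p \in [pchar K])
  (hr : forall a : K, r a ^+ p = a) (h : {poly K}) :
  (size (Delta p r h) <= (size h).-1)%N.
Proof.
have hp := prime_gt1 (pcharf_prime charKp).
apply/leq_sizeP => j hj; rewrite (coef_Delta charKp hr); case: ifP => // /dvdnP [q hq].
rewrite nth_default ?(r0 charKp hr) //.
rewrite hq mulnK; last by lia.
have : (size h <= j.+1)%N by lia.
move=> h1; apply: leq_trans h1 _; rewrite hq; nia.
Qed.

Lemma iterDelta0 (K : fieldType) (p : nat) (r : K -> K) (charKp : p \in [pchar K])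
  (hr : forall a : K, r a ^+ p = a) n (h : {poly K}) :
  (size h <= n)%N -> iter n (Delta p r) h = 0.
Proof.
elim: n h => [|n IH] h hs; first by apply/eqP; rewrite /= -size_poly_eq0; lia.
rewrite iterSr; apply: IH; have := size_Delta charKp hr h; lia.
Qed.

Lemma coef_termX (K : fieldType) (p k : nat) (a : {poly K}) n :
  (0 < p)%N -> (k < p)%N -> inXn (p * p) a ->
  (a * 'X^(p * k))`_n = if (n %% (p * p) == p * k)%N then a`_(n - p * k) else 0.
Proof.
move=> hp hk ha; rewrite coefMXn.
case: ltnP => hn.
  case: eqP => // he; have := leq_mod n (p * p); rewrite he; lia.
case: eqP => // he; apply: ha; apply: contra_notN he => /dvdnP [m hm].
have -> : n = m * (p * p) + p * k by lia.
by rewrite modnMDl modn_small // ltn_mul2l; lia.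
Qed.


Lemma pi_extract (K : fieldType) (p i : nat) (a : nat -> {poly K}) :
  (0 < p)%N -> (i < p)%N -> (forall k, inXn (p * p) (a k)) ->
  pi_ p i (\sum_(k < p) a k * 'X^(p * k)) = a i.
Proof.
move=> hp hi ha; apply/polyP => m; rewrite coef_pi.
case: ifP => [/dvdnP [q hq] | hm]; last by rewrite ha ?hm.
rewrite coef_sum.
rewrite (eq_bigr (fun k : 'I_p => if (k == i :> nat) then (a k)`_(m + p * i - p * k) else 0)); last first.
  move=> k _; rewrite coef_termX ?ltn_ord //.
  have -> : ((m + p * i) %% (p * p))%N = (p * i)%N.
    by rewrite hq modnMDl modn_small // ltn_mul2l hi; lia.
  rewrite eqn_mul2l; have -> : (p == 0%N) = false by apply/eqP; lia.
  by rewrite eq_sym.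
rewrite -big_mkcond /= (big_ord1_eq _ (fun k => (a k)`_(m + p * i - p * k))) hi.
by rewrite addnK.
Qed.

Lemma pi_inXn (K : fieldType) (p i : nat) (L : {poly K}) : inXn (p * p) (pi_ p i L).
Proof. by move=> m hm; rewrite coef_pi (negbTE hm). Qed.

Lemma decomp (K : fieldType) (p : nat) (L : {poly K}) :
  (0 < p)%N -> inXn p L -> L = \sum_(k < p) pi_ p k L * 'X^(p * k).
Proof.
move=> hp hL; apply/polyP => n; rewrite coef_sum.
rewrite (eq_bigr (fun k : 'I_p => if (n %% (p * p) == p * k)%N then L`_n else 0)); last first.
  move=> k _; rewrite (@coef_termX K p k (pi_ p k L) n hp (ltn_ord k) (@pi_inXn K p k L)).
  case: eqP => // he; rewrite coef_pi.
  have hle : (p * k <= n)%N by have := leq_mod n (p * p); lia.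
  rewrite subnK //.
  have -> : (p * p %| n - p * k)%N.
    by apply/dvdnP; exists (n %/ (p * p))%N; have := div.divn_eq n (p * p); lia.
  by [].
case hn: (p %| n)%N; last first.
  by rewrite big1 ?hL ?hn // => k _; case: ifP.
set k0 := ((n %% (p * p)) %/ p)%N.
have hk0 : (n %% (p * p) = p * k0)%N.
  rewrite /k0 mulnC divnK //.
  by move: hn; rewrite /dvdn (@modn_dvdm (p * p) n p) // dvdn_mulr.
have hk0p : (k0 < p)%N.
  by rewrite /k0 ltn_divLR // ltn_mod muln_gt0 hp.
rewrite (eq_bigr (fun k : 'I_p => if (k == k0 :> nat) then L`_n else 0)); last first.
  move=> k _; rewrite hk0 eqn_mul2l.
  have -> : (p == 0%N) = false by apply/eqP; lia.
  by rewrite /= eq_sym.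
by rewrite -big_mkcond /= (big_ord1_eq _ (fun k => L`_n)) hk0p.
Qed.


Lemma sum_recr (V : zmodType) n (F : nat -> V) :
  \sum_(i < n.+1) F i = \sum_(i < n) F i + F n.
Proof. by rewrite big_ord_recr. Qed.

Lemma theta_expand (K : fieldType) (p : nat) (charKp : p \in [pchar K])
  (lambda : nat -> {poly K}) (hlam : forall i, inXn p (lambda i)) :
  theta p (\sum_(i < p) lambda i * 'X^i)
  = \sum_(i < p) lambda i ^+ p * 'X^(p * i) - lambda (p - 1)%N.
Proof.
have hp := prime_gt1 (pcharf_prime charKp).
have charP : p \in [pchar {poly K}] by rewrite pchar_poly.
have hp1 : (p - 1).+1 = p by lia.
rewrite /theta -[(\sum_(i < p) _) ^+ p]/(pFrobenius_aut charP _) rmorph_sum.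
rewrite raddf_sum.
have -> : \sum_(i < p) (lambda i * 'X^i)^`(p.-1) = - lambda (p - 1)%N.
  rewrite (eq_bigr (fun i : 'I_p => lambda i * ('X^i)^`(p.-1))); last first.
    by move=> i _; rewrite derivn_mulC // (deriv_inXn charKp).
  have := @sum_recr _ (p - 1) (fun i => lambda i * ('X^i)^`(p.-1)).
  rewrite hp1 => ->.
  rewrite big1; last first.
    move=> i _; rewrite derivnXn ffact_small ?mulr0n ?mulr0 //.
    have := ltn_ord i; lia.
  rewrite add0r derivnXn -subn1 subnn ffactnn expr0.
  have hW := Wilson hp.
  rewrite (pcharf_prime charKp) -subn1 in hW.
  have /eqP : ((p - 1)`!.+1)%:R == 0 :> {poly K} by rewrite -(dvdn_pcharf charP) -hW.
  rewrite mulrSr => /eqP; rewrite addr_eq0 => /eqP ->.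
  by rewrite mulrN1.
congr (_ - _); apply: eq_bigr => i _.
by rewrite -[LHS]/((lambda i * 'X^i) ^+ p) exprMn -exprM mulnC.
Qed.


Lemma Delta_frob (K : fieldType) (p : nat) (r : K -> K) (charKp : p \in [pchar K])
  (hr : forall a : K, r a ^+ p = a) (L : {poly K}) :
  Delta p r (L ^+ p) = pi_ p (p - 1) L.
Proof.
have hp := prime_gt1 (pcharf_prime charKp).
apply/polyP => k; rewrite (coef_Delta charKp hr) coef_pi; case: ifP => // /dvdnP [q hq].
rewrite (coef_frob charKp) dvdn_mulr ?dvdn_mulr // (r_pow charKp hr).
congr (L`_ _); rewrite hq mulnK; last by nia.
rewrite -mulnA mulKn; last by lia.
nia.
Qed.

Lemma sumDelta_tele (K : fieldType) (p : nat) (r : K -> K) (charKp : p \in [pchar K])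
  (hr : forall a : K, r a ^+ p = a) (X : {poly K}) :
  sumDelta p r (X - Delta p r X) = X.
Proof.
set mu := X - Delta p r X.
have hs : (size X <= size mu)%N.
  have := size_Delta charKp hr X.
  case: (eqVneq X 0) => [-> | hX] hD; first by rewrite size_poly0.
  rewrite /mu size_polyDl // size_polyN; have := size_poly_gt0 X; rewrite hX => h0; by rewrite -(prednK h0) ltnS.
rewrite /sumDelta.
rewrite (eq_bigr (fun j : 'I_(size mu) => - (iter j.+1 (Delta p r) X - iter j (Delta p r) X))); last first.
  by move=> j _; rewrite /mu (iterDeltaB charKp hr) -iterSr opprB.
rewrite sumrN -(big_mkord xpredT (fun j => iter j.+1 (Delta p r) X - iter j (Delta p r) X)).
rewrite telescope_sumr // (iterDelta0 charKp hr hs) /=.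
by rewrite sub0r opprK.
Qed.

Unset Implicit Arguments.

Theorem proposition2p2 (K : fieldType) (p : nat) (r : K -> K)
  (charKp : p \in [pchar K])
  (hr : forall a : K, r a ^+ p = a)
  (f : {poly K})
  (mu lambda : nat -> {poly K})
  (hmu : forall i, inXn (p * p) (mu i))
  (hg : theta p f = \sum_(i < p) mu i * 'X^(p * i))
  (hlam : forall i, inXn p (lambda i))
  (hf : f = \sum_(i < p) lambda i * 'X^i) :
  (forall i : nat, (i < p - 1)%N ->
     lambda i = Finv p r (mu i)
                + Finv p r (pi_ p i (Finv p r (sumDelta p r (mu (p - 1)%N)))))
  /\
  lambda (p - 1)%N =
    \sum_(i < p - 1) 'X^(p * i) * pi_ p i (Finv p r (sumDelta p r (mu (p - 1)%N)))
    + 'X^(p * (p - 1)) * sumDelta1 p r (mu (p - 1)%N).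
Proof.
have hp := prime_gt1 (pcharf_prime charKp).
have hp0 : (0 < p)%N by lia.
set L := lambda (p - 1)%N.
have hT := theta_expand charKp hlam.
rewrite -hf hg in hT.
have hmuI : forall i, (i < p)%N -> mu i = lambda i ^+ p - pi_ p i L.
  move=> i hi.
  have := congr1 (pi_ p i) hT.
  rewrite piB (pi_extract (a := fun k => lambda k ^+ p)) //; last first.
    by move=> k; apply: inXn_frob.
  by rewrite (pi_extract (a := mu)) // => ->.
have hmuP : mu (p - 1)%N = L ^+ p - Delta p r (L ^+ p).
  by rewrite (Delta_frob charKp hr) hmuI //; lia.
have hS : sumDelta p r (mu (p - 1)%N) = L ^+ p.
  by rewrite hmuP (sumDelta_tele charKp hr).
have hFS : Finv p r (sumDelta p r (mu (p - 1)%N)) = L.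
  by rewrite hS (Finv_frob charKp hr).
rewrite hFS; split.
  move=> i hi.
  rewrite -(FinvD charKp hr) hmuI; last by lia.
  by rewrite subrK (Finv_frob charKp hr).
have hS1 : sumDelta1 p r (mu (p - 1)%N) = pi_ p (p - 1) L.
  have h1 : sumDelta p r (mu (p - 1)%N) = mu (p - 1)%N + sumDelta1 p r (mu (p - 1)%N).
    rewrite /sumDelta /sumDelta1.
    case: (eqVneq (mu (p - 1)%N) 0) => [-> | hne].
      by rewrite size_poly0 big_ord0 big_geq // addr0.
    rewrite -(big_mkord xpredT) big_ltn ?size_poly_gt0 //.
  have -> : sumDelta1 p r (mu (p - 1)%N) = sumDelta p r (mu (p - 1)%N) - mu (p - 1)%N.
    by rewrite h1 addrAC subrr add0r.
  rewrite hS hmuI; last by lia.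
  by rewrite opprB addrC subrK.
rewrite hS1.
have hp1 : (p - 1).+1 = p by lia.
rewrite {1}[L](decomp hp0 (hlam (p - 1)%N)) -/L.
have := @sum_recr _ (p - 1) (fun k => pi_ p k L * 'X^(p * k)).
rewrite hp1 => ->.
rewrite mulrC; congr (_ + _).
by apply: eq_bigr => i _; rewrite mulrC.
Qed.
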